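(* Let $(A,\cdot,\circ)$ be a skew brace and $B$, $C$ sub-skew braces with $A = B\cdot C$. If $B$ is a trivial skew brace, then $B*C$ is a normal subgroup of $(A,\cdot)$.
   Context: A skew brace is a set $A$ with two group operations $\cdot$ (often written by juxtaposition) and $\circ$ such that $a\circ(bc) = (a\circ b)\,a^{-1}\,(a\circ c)$ for all $a,b,c\in A$. $a^{-1}$ denotes the inverse in $(A,\cdot)$. Define $a*b = a^{-1}(a\circ b)b^{-1}$; $B*C$ is the subgroup of $(A,\cdot)$ generated by all $b*c$, $b\in B$, $c\in C$. A sub-skew brace is a subset that is a subgroup of both groups; it is trivial if $a\circ b=ab$ for all its elements $a,b$. $A=B\cdot C$ means every element of $A$ is $bc$ with $b\in B$, $c\in C$. *)

(* Defs.v *)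
Set Implicit Arguments.

Record group_on (A : Type) := GroupOn {
  gmul : A -> A -> A;
  ginv : A -> A;
  gone : A;
  gmulA : forall a b c, gmul a (gmul b c) = gmul (gmul a b) c;
  gmul1l : forall a, gmul gone a = a;
  gmul1r : forall a, gmul a gone = a;
  gmulVl : forall a, gmul (ginv a) a = gone;
  gmulVr : forall a, gmul a (ginv a) = gone
}.

Record skew_brace (A : Type) := SkewBrace {
  dotg : group_on A;
  circg : group_on A;
  brace_comp : forall a b c,
    gmul circg a (gmul dotg b c) =
    gmul dotg (gmul dotg (gmul circg a b) (ginv dotg a)) (gmul circg a c)
}.

Section SkewBraceDefs.
Variables (A : Type) (S : skew_brace A).

Definition dmul := gmul (dotg S).
Definition dinv := ginv (dotg S).
Definition done_ := gone (dotg S).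
Definition cmul := gmul (circg S).

Definition star (a b : A) : A := dmul (dmul (dinv a) (cmul a b)) (dinv b).

Definition is_subgroup (G : group_on A) (H : A -> Prop) : Prop :=
  H (gone G) /\ (forall x y, H x -> H y -> H (gmul G x y)) /\
  (forall x, H x -> H (ginv G x)).

Definition sub_skew_brace (B : A -> Prop) : Prop :=
  is_subgroup (dotg S) B /\ is_subgroup (circg S) B.

Definition trivial_sub (B : A -> Prop) : Prop :=
  forall a b, B a -> B b -> cmul a b = dmul a b.

Definition gen_dot (X : A -> Prop) : A -> Prop :=
  fun x => forall H, is_subgroup (dotg S) H -> (forall y, X y -> H y) -> H x.

Definition star_set (B C : A -> Prop) : A -> Prop :=
  gen_dot (fun x => exists b c, B b /\ C c /\ x = star b c).

Definition dot_product_full (B C : A -> Prop) : Prop :=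
  forall a, exists b c, B b /\ C c /\ a = dmul b c.

Definition normal_dot (N : A -> Prop) : Prop :=
  is_subgroup (dotg S) N /\
  forall a n, N n -> N (dmul (dmul a n) (dinv a)).

End SkewBraceDefs.

(* Main.v *)
Require Import Defs.
Set Implicit Arguments.

Section G.
Variables (A : Type) (G : group_on A).
Local Notation "x * y" := (gmul G x y).
Local Notation "x ^-1" := (ginv G x) (at level 3).
Local Notation "1" := (gone G).

Lemma mulKl x y : x^-1 * (x * y) = y.
Proof. rewrite gmulA, gmulVl, gmul1l; reflexivity. Qed.
Lemma mulKr x y : x * (x^-1 * y) = y.
Proof. rewrite gmulA, gmulVr, gmul1l; reflexivity. Qed.
Lemma mulKVr x y : (y * x) * x^-1 = y.
Proof. rewrite <- gmulA, gmulVr, gmul1r; reflexivity. Qed.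
Lemma mulVKr x y : (y * x^-1) * x = y.
Proof. rewrite <- gmulA, gmulVl, gmul1r; reflexivity. Qed.
Lemma inv_uniq x y : x * y = 1 -> y = x^-1.
Proof. intro H. rewrite <- (mulKl x y), H, gmul1r; reflexivity. Qed.
Lemma inv_mul x y : (x * y)^-1 = y^-1 * x^-1.
Proof.
  symmetry; apply inv_uniq. rewrite <- gmulA, (gmulA G y), gmulVr, gmul1l, gmulVr.
  reflexivity.
Qed.
Lemma inv_inv x : (x^-1)^-1 = x.
Proof. symmetry; apply inv_uniq, gmulVl. Qed.
Lemma inv1 : 1^-1 = 1.
Proof. symmetry; apply inv_uniq, gmul1l. Qed.
End G.

Lemma gen_sub (A : Type) (S : skew_brace A) X :
  is_subgroup (dotg S) (gen_dot S X).
Proof.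
  split; [|split].
  - intros H [h1 _] _; exact h1.
  - intros x y hx hy H hH hX. pose proof hH as [_ [hm _]]. apply hm; [apply hx|apply hy]; auto.
  - intros x hx H hH hX. pose proof hH as [_ [_ hi]]. apply hi; apply hx; auto.
Qed.

Lemma gen_in (A : Type) (S : skew_brace A) (X : A -> Prop) x :
  X x -> gen_dot S X x.
Proof. intros h H _ hX; auto. Qed.

Lemma conj_gen (A : Type) (S : skew_brace A) (X : A -> Prop) a :
  (forall g, X g -> gen_dot S X (dmul S (dmul S a g) (dinv S a))) ->
  forall n, gen_dot S X n -> gen_dot S X (dmul S (dmul S a n) (dinv S a)).
Proof.
  intros hg n hn. unfold dmul, dinv in *.
  destruct (gen_sub S X) as [g1 [gm gi]].
  apply (hn (fun x => gen_dot S X (gmul (dotg S) (gmul (dotg S) a x) (ginv (dotg S) a)))); auto.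
  split; [|split].
  - rewrite gmul1r, gmulVr. exact g1.
  - intros x y hx hy.
    replace (gmul (dotg S) (gmul (dotg S) a (gmul (dotg S) x y)) (ginv (dotg S) a))
      with (gmul (dotg S) (gmul (dotg S) (gmul (dotg S) a x) (ginv (dotg S) a))
              (gmul (dotg S) (gmul (dotg S) a y) (ginv (dotg S) a))); auto.
    rewrite !gmulA, mulVKr. reflexivity.
  - intros x hx.
    replace (gmul (dotg S) (gmul (dotg S) a (ginv (dotg S) x)) (ginv (dotg S) a))
      with (ginv (dotg S) (gmul (dotg S) (gmul (dotg S) a x) (ginv (dotg S) a))); auto.
    rewrite !inv_mul, inv_inv, gmulA. reflexivity.
Qed.

Section Main.
Variables (A : Type) (S : skew_brace A).
Local Notation "x * y" := (gmul (dotg S) x y).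
Local Notation "x ^-1" := (ginv (dotg S) x) (at level 3).
Local Notation "1" := (gone (dotg S)).

Lemma starE a b : star S a b = (a^-1 * gmul (circg S) a b) * b^-1.
Proof. reflexivity. Qed.

Lemma star_mul a x y : star S a (x * y) = star S a x * x * star S a y * x^-1.
Proof.
  rewrite !starE, (brace_comp S), inv_mul, !gmulA, (mulVKr (dotg S) x). reflexivity.
Qed.

End Main.

Theorem proposition3p1 (A : Type) (S : skew_brace A) (B C : A -> Prop) :
  sub_skew_brace S B -> sub_skew_brace S C ->
  dot_product_full S B C ->
  trivial_sub S B ->
  normal_dot S (star_set S B C).
Proof.
  intros [[B1 [Bm Bi]] _] [[C1 [Cm Ci]] _] hF hT.
  set (X := fun x => exists b c, B b /\ C c /\ x = star S b c).
  assert (HN := gen_sub S X).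
  destruct (gen_sub S X) as [N1 [Nm Ni]].
  assert (sBB : forall b b', B b -> B b' -> star S b b' = gone (dotg S)).
  { intros b b' hb hb'. rewrite starE. unfold trivial_sub, cmul, dmul in hT.
    rewrite hT by assumption. rewrite mulKl, gmulVr. reflexivity. }
  assert (conjC : forall c g, C c -> X g -> gen_dot S X (dmul S (dmul S c g) (dinv S c))).
  { intros c g hc [b [c' [hb [hc' ->]]]]. unfold dmul, dinv.
    replace (gmul (dotg S) (gmul (dotg S) c (star S b c')) (ginv (dotg S) c))
      with (gmul (dotg S) (ginv (dotg S) (star S b c)) (star S b (gmul (dotg S) c c'))).
    - apply Nm; [apply Ni|]; apply gen_in; unfold X; eauto 6.
    - rewrite star_mul, !gmulA, gmulVl, gmul1l. reflexivity. }
  assert (conjB : forall b g, B b -> X g -> gen_dot S X (dmul S (dmul S b g) (dinv S b))).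
  { intros b g hb [b'' [c [hb'' [hc ->]]]]. unfold dmul, dinv.
    destruct (hF (ginv (dotg S) (gmul (dotg S) b c))) as [b1 [c1 [hb1 [hc1 E]]]].
    unfold dmul in E.
    assert (E2 : gmul (dotg S) b c = gmul (dotg S) (ginv (dotg S) c1) (ginv (dotg S) b1)).
    { rewrite <- inv_mul, <- E, inv_inv. reflexivity. }
    assert (E3 : star S b'' (gmul (dotg S) b c) = gmul (dotg S) (gmul (dotg S) b (star S b'' c)) (ginv (dotg S) b)).
    { rewrite star_mul, sBB by assumption. rewrite gmul1l; try reflexivity. }
    rewrite <- E3, E2, star_mul, (sBB b'' (ginv (dotg S) b1) hb'' (Bi _ hb1)).
    rewrite gmul1r, mulKVr. apply gen_in. unfold X; eauto 6. }
  split; [exact HN|].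
  intros a n hn. destruct (hF a) as [b [c [hb [hc ->]]]].
  unfold dmul, dinv.
  replace (gmul (dotg S) (gmul (dotg S) (gmul (dotg S) b c) n) (ginv (dotg S) (gmul (dotg S) b c)))
    with (gmul (dotg S) (gmul (dotg S) b (gmul (dotg S) (gmul (dotg S) c n) (ginv (dotg S) c))) (ginv (dotg S) b)).
  - apply (@conj_gen _ S X b); [intros; apply conjB; auto|].
    apply (@conj_gen _ S X c); [intros; apply conjC; auto|exact hn].
  - rewrite inv_mul, !gmulA. reflexivity.
Qed.
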